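(* Consider the GTFG system with $\lambda=0$ (setting below) and the invariant set $\mathcal M_1=\{\xi_1=0,\ \xi_2=0\}\subset\mathcal P^6$, where $\xi_1=w_1^2+\varepsilon_0x_1-\mathrm i\varepsilon_1(x_1w_3-2z_1w_1)-\varepsilon_1^2r^2$, $\xi_2=w_2^2+\varepsilon_0x_2+\mathrm i\varepsilon_1(x_2w_3-2z_2w_2)-\varepsilon_1^2r^2$ (so that $K=\xi_1\xi_2$). Let $$N=\sqrt{[\varepsilon_0+\mathrm i\varepsilon_1(w_3+\mathrm i\varepsilon_1y_1)][\varepsilon_0-\mathrm i\varepsilon_1(w_3-\mathrm i\varepsilon_1y_2)]}+\varepsilon_1^2\sqrt{x_1x_2},$$ $$F=\sqrt{x_1x_2}\,w_3-\frac{x_2z_1w_1+x_1z_2w_2}{\sqrt{x_1x_2}}+\mathrm i\varepsilon_1r^2\frac{x_1-x_2}{\sqrt{x_1x_2}}.$$ Then the points of $\mathcal M_1$ have outer type ''center'', except for the points with $N\,F=0$, which are degenerate with respect to the whole system on $\mathcal P^6$. (Here, with $\Phi=K$, one has $C_\Phi=-4N^2F^2$.)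
   Context: Phase variables $\mathbf M,\boldsymbol\alpha,\boldsymbol\beta\in\mathbb R^3$ on $e(3,2)^*\cong\mathbb R^9$ with Lie–Poisson dynamics: a function $\Phi$ generates the vector field $\mathrm{sgrad}\,\Phi$: $\dot{\mathbf M}=\mathbf M\times\partial\Phi/\partial\mathbf M+\boldsymbol\alpha\times\partial\Phi/\partial\boldsymbol\alpha+\boldsymbol\beta\times\partial\Phi/\partial\boldsymbol\beta$, $\dot{\boldsymbol\alpha}=\boldsymbol\alpha\times\partial\Phi/\partial\mathbf M$, $\dot{\boldsymbol\beta}=\boldsymbol\beta\times\partial\Phi/\partial\mathbf M$. Constants $a>b>0$, $r^2=a^2-b^2$; phase space $\mathcal P^6=\{\boldsymbol\alpha^2=a^2,\boldsymbol\beta^2=b^2,\boldsymbol\alpha\cdot\boldsymbol\beta=0\}$. Real parameters $\varepsilon_0\ge0,\varepsilon_1,\lambda$. GTFG Hamiltonian $H=\tfrac14(M_1^2+M_2^2)+\tfrac12(M_3-\lambda)^2-\varepsilon_1[(\alpha_2M_3-\alpha_3M_2)+(\beta_3M_1-\beta_1M_3)]-\varepsilon_0(\alpha_1+\beta_2)$. Complex variables: $x_{1,2}=(\alpha_1-\beta_2)\pm\mathrm i(\alpha_2+\beta_1)$, $y_{1,2}=(\alpha_1+\beta_2)\pm\mathrm i(\alpha_2-\beta_1)$, $z_{1,2}=\alpha_3\pm\mathrm i\beta_3$, $w_{1,2}=\tfrac12(M_1\pm\mathrm iM_2)$, $w_3=M_3-\lambda$. Both square roots in $N$ are of nonnegative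 real numbers (the first radicand is $|\cdot|^2$, $x_1x_2=|x_1|^2$) and are taken nonnegative. With $\lambda=0$ the function $K=\xi_1\xi_2$ is a first integral of the GTFG system, and $\mathcal M_1=\{K=0,dK=0\}$. Outer type: for a critical subsystem $\mathcal M$ given as $\{\Phi=0,\ d\Phi=0\}$ for a first integral $\Phi$ (here $\Phi=K$), each $x\in\mathcal M$ is a zero of $\mathrm{sgrad}\,\Phi$; let $A_\Phi$ be its linearization at $x$ (a linear operator on $\mathbb R^9$). Its characteristic polynomial has the form $-\mu^7(\mu^2-C_\Phi)$, $C_\Phi=\tfrac12\operatorname{tr}(A_\Phi^2)$. The outer type of $x$ is ''center'' if $C_\Phi<0$, ''saddle'' if $C_\Phi>0$, and $x$ is degenerate if $C_\Phi=0$. *)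

(* Defs.v *)
From Stdlib Require Import Reals Arith.
From Coquelicot Require Import Coquelicot.
Open Scope R_scope.

(** A point of e(3,2)^* ~ R^9, coordinates indexed 0..8:
    0,1,2 = M1,M2,M3 ; 3,4,5 = alpha1,alpha2,alpha3 ; 6,7,8 = beta1,beta2,beta3.
    (Values at indices >= 9 are irrelevant.) *)
Definition pt := nat -> R.

Definition Mc (p : pt) (i : nat) : R := p i.
Definition al (p : pt) (i : nat) : R := p (3 + i)%nat.
Definition be (p : pt) (i : nat) : R := p (6 + i)%nat.

Definition upd (p : pt) (k : nat) (t : R) : pt :=
  fun i => if Nat.eqb i k then t else p i.

Definition pd (f : pt -> R) (k : nat) (p : pt) : R :=
  Derive (fun t => f (upd p k t)) (p k).

Definition blk (p : pt) (off : nat) : nat -> R := fun i => p (off + i)%nat.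
Definition gblk (f : pt -> R) (p : pt) (off : nat) : nat -> R :=
  fun i => pd f (off + i)%nat p.

Definition crossc (u v : nat -> R) (i : nat) : R :=
  match i with
  | 0%nat => u 1%nat * v 2%nat - u 2%nat * v 1%nat
  | 1%nat => u 2%nat * v 0%nat - u 0%nat * v 2%nat
  | 2%nat => u 0%nat * v 1%nat - u 1%nat * v 0%nat
  | _ => 0
  end.

(** Lie--Poisson Hamiltonian vector field sgrad Phi on e(3,2)^*:
    Mdot = M x dPhi/dM + alpha x dPhi/dalpha + beta x dPhi/dbeta,
    alphadot = alpha x dPhi/dM, betadot = beta x dPhi/dM. *)
Definition sgrad (Phi : pt -> R) (p : pt) : pt :=
  fun j =>
    if (j <? 3)%nat then
      crossc (blk p 0) (gblk Phi p 0) j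
      + crossc (blk p 3) (gblk Phi p 3) j
      + crossc (blk p 6) (gblk Phi p 6) j
    else if (j <? 6)%nat then crossc (blk p 3) (gblk Phi p 0) (j - 3)
    else if (j <? 9)%nat then crossc (blk p 6) (gblk Phi p 0) (j - 6)
    else 0.

Definition Alin (Phi : pt -> R) (p : pt) (j k : nat) : R :=
  Derive (fun t => sgrad Phi (upd p k t) j) (p k).

Definition CPhi (Phi : pt -> R) (p : pt) : R :=
  / 2 * sum_f_R0 (fun j => sum_f_R0 (fun k => Alin Phi p j k * Alin Phi p k j) 8) 8.

Definition outer_center (Phi : pt -> R) (p : pt) : Prop := CPhi Phi p < 0.
Definition outer_saddle (Phi : pt -> R) (p : pt) : Prop := CPhi Phi p > 0.
Definition outer_degenerate (Phi : pt -> R) (p : pt) : Prop := CPhi Phi p = 0.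

Definition inP6 (a b : R) (p : pt) : Prop :=
  al p 0 ^ 2 + al p 1 ^ 2 + al p 2 ^ 2 = a ^ 2 /\
  be p 0 ^ 2 + be p 1 ^ 2 + be p 2 ^ 2 = b ^ 2 /\
  al p 0 * be p 0 + al p 1 * be p 1 + al p 2 * be p 2 = 0.

Definition x1 (p : pt) : C := (al p 0 - be p 1, al p 1 + be p 0).
Definition x2 (p : pt) : C := (al p 0 - be p 1, - (al p 1 + be p 0)).
Definition y1 (p : pt) : C := (al p 0 + be p 1, al p 1 - be p 0).
Definition y2 (p : pt) : C := (al p 0 + be p 1, - (al p 1 - be p 0)).
Definition z1 (p : pt) : C := (al p 2, be p 2).
Definition z2 (p : pt) : C := (al p 2, - be p 2).
Definition w1 (p : pt) : C := (/ 2 * Mc p 0, / 2 * Mc p 1).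
Definition w2 (p : pt) : C := (/ 2 * Mc p 0, - (/ 2 * Mc p 1)).
Definition w3 (lam : R) (p : pt) : C := RtoC (Mc p 2 - lam).

Local Open Scope C_scope.

(** xi_1, xi_2 ; r2 stands for r^2 = a^2 - b^2 *)
Definition xi1 (a b eps0 eps1 lam : R) (p : pt) : C :=
  w1 p * w1 p + RtoC eps0 * x1 p
  - Ci * RtoC eps1 * (x1 p * w3 lam p - RtoC 2 * z1 p * w1 p)
  - RtoC (eps1 ^ 2 * (a ^ 2 - b ^ 2)).
Definition xi2 (a b eps0 eps1 lam : R) (p : pt) : C :=
  w2 p * w2 p + RtoC eps0 * x2 p
  + Ci * RtoC eps1 * (x2 p * w3 lam p - RtoC 2 * z2 p * w2 p)
  - RtoC (eps1 ^ 2 * (a ^ 2 - b ^ 2)).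

(** K = xi1 * xi2 ; this product is real (xi2 is the complex conjugate of
    xi1), so K is its real part. *)
Definition Kfun (a b eps0 eps1 lam : R) (p : pt) : R :=
  Re (xi1 a b eps0 eps1 lam p * xi2 a b eps0 eps1 lam p).

(** sqrt (x1 x2) (x1 x2 = |x1|^2 is real and nonnegative) *)
Definition sqx (p : pt) : R := sqrt (Re (x1 p * x2 p)).

Definition Nfun (eps0 eps1 lam : R) (p : pt) : R :=
  sqrt (Re ((RtoC eps0 + Ci * RtoC eps1 * (w3 lam p + Ci * RtoC eps1 * y1 p))
          * (RtoC eps0 - Ci * RtoC eps1 * (w3 lam p - Ci * RtoC eps1 * y2 p))))
  + eps1 ^ 2 * sqx p.

(** F (a real number; taken as the real part of the complex expression).
    Division uses Coquelicot's total complex division. *)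
Definition Ffun (a b eps1 lam : R) (p : pt) : R :=
  Re (RtoC (sqx p) * w3 lam p
      - (x2 p * z1 p * w1 p + x1 p * z2 p * w2 p) / RtoC (sqx p)
      + Ci * RtoC eps1 * RtoC (a ^ 2 - b ^ 2) * (x1 p - x2 p) / RtoC (sqx p)).

(* Main.v *)
Require Import Defs.
From Stdlib Require Import Reals Lra Lia FunctionalExtensionality.
From Coquelicot Require Import Coquelicot.
Open Scope R_scope.
Definition fF (e0 e1 r2 : R) (p : pt) : R := (-1)*e1*e1*r2 + (-1)*(p 7%nat)*e0 + 1*(p 3%nat)*e0 + 1*(p 2%nat)*(p 6%nat)*e1 + 1*(p 2%nat)*(p 4%nat)*e1 + (-1)*(p 1%nat)*(p 5%nat)*e1 + (-1/4)*(p 1%nat)*(p 1%nat) + (-1)*(p 0%nat)*(p 8%nat)*e1 + (1/4)*(p 0%nat)*(p 0%nat).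
Definition gF (e0 e1 r2 : R) (p : pt) : R := 1*(p 6%nat)*e0 + 1*(p 4%nat)*e0 + 1*(p 2%nat)*(p 7%nat)*e1 + (-1)*(p 2%nat)*(p 3%nat)*e1 + (-1)*(p 1%nat)*(p 8%nat)*e1 + 1*(p 0%nat)*(p 5%nat)*e1 + (1/2)*(p 0%nat)*(p 1%nat).
Definition fdE (e0 e1 : R) (i : nat) (p : pt) : R :=
  match i with
  | 0%nat => (-1)*(p 8%nat)*e1 + (1/2)*(p 0%nat)
  | 1%nat => (-1)*(p 5%nat)*e1 + (-1/2)*(p 1%nat)
  | 2%nat => 1*(p 6%nat)*e1 + 1*(p 4%nat)*e1
  | 3%nat => 1*e0
  | 4%nat => 1*(p 2%nat)*e1
  | 5%nat => (-1)*(p 1%nat)*e1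
  | 6%nat => 1*(p 2%nat)*e1
  | 7%nat => (-1)*e0
  | 8%nat => (-1)*(p 0%nat)*e1
  | _ => 0 end.
Definition gdE (e0 e1 : R) (i : nat) (p : pt) : R :=
  match i with
  | 0%nat => 1*(p 5%nat)*e1 + (1/2)*(p 1%nat)
  | 1%nat => (-1)*(p 8%nat)*e1 + (1/2)*(p 0%nat)
  | 2%nat => 1*(p 7%nat)*e1 + (-1)*(p 3%nat)*e1
  | 3%nat => (-1)*(p 2%nat)*e1
  | 4%nat => 1*e0
  | 5%nat => 1*(p 0%nat)*e1
  | 6%nat => 1*e0
  | 7%nat => 1*(p 2%nat)*e1
  | 8%nat => (-1)*(p 1%nat)*e1
  | _ => 0 end.
Lemma K_eq a b e0 e1 p : Kfun a b e0 e1 0 p = fF e0 e1 (a^2-b^2) p ^ 2 + gF e0 e1 (a^2-b^2) p ^ 2.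
Proof.
  unfold Kfun, xi1, xi2, x1, x2, z1, z2, w1, w2, w3, fF, gF, Mc, al, be.
  unfold Cmult, Cplus, Cminus, Copp, RtoC, Ci, Re. simpl. field.
Qed.
Lemma D_plus (f g : R -> R) (x a b : R) : is_derive f x a -> is_derive g x b -> is_derive (fun t => f t + g t) x (a + b).
Proof. intros; apply (is_derive_plus f g x a b); auto. Qed.
Lemma D_minus (f g : R -> R) (x a b : R) : is_derive f x a -> is_derive g x b -> is_derive (fun t => f t - g t) x (a - b).
Proof. intros; apply (is_derive_minus f g x a b); auto. Qed.
Lemma D_mult (f g : R -> R) (x a b : R) : is_derive f x a -> is_derive g x b -> is_derive (fun t => f t * g t) x (a * g x + f x * b).
Proof. intros Hf Hg. apply (is_derive_mult f g x a b Hf Hg). intros; apply Rmult_comm. Qed.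
Lemma D_const (c x : R) : is_derive (fun _ => c) x 0.
Proof. apply (is_derive_const c x). Qed.
Lemma D_coord (q : pt) k m : is_derive (fun t => upd q k t m) (q k) (if Nat.eqb m k then 1 else 0).
Proof. unfold upd. destruct (Nat.eqb m k). apply (is_derive_id (q k)). apply D_const. Qed.
Lemma D_val (f : R -> R) (x l l' : R) : is_derive f x l -> l = l' -> is_derive f x l'.
Proof. intros H ->; exact H. Qed.
Lemma upd_id (q : pt) k : upd q k (q k) = q.
Proof. apply functional_extensionality; intro i. unfold upd. destruct (Nat.eqb i k) eqn:E; auto. apply Nat.eqb_eq in E; subst; auto. Qed.
Ltac der1 := match goal with
 | |- is_derive (fun t => @?A t + @?B t) _ _ => apply (D_plus A B)
 | |- is_derive (fun t => @?A t - @?B t) _ _ => apply (D_minus A B)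
 | |- is_derive (fun t => @?A t * @?B t) _ _ => apply (D_mult A B)
 | |- is_derive (fun t => upd _ _ t _) _ _ => apply D_coord
 | |- is_derive (fun t => ?c) _ _ => apply (D_const c)
end.
Ltac der := repeat der1.

Lemma ex_fF e0 e1 r2 q k : ex_derive (fun t => fF e0 e1 r2 (upd q k t)) (q k).
Proof. eexists. unfold fF. der. Qed.
Lemma ex_gF e0 e1 r2 q k : ex_derive (fun t => gF e0 e1 r2 (upd q k t)) (q k).
Proof. eexists. unfold gF. der. Qed.
Lemma ex_fdE e0 e1 i q k : ex_derive (fun t => fdE e0 e1 i (upd q k t)) (q k).
Proof. destruct i as [|[|[|[|[|[|[|[|[|i]]]]]]]]]; cbn [fdE]; eexists; der. Qed.
Lemma ex_gdE e0 e1 i q k : ex_derive (fun t => gdE e0 e1 i (upd q k t)) (q k).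
Proof. destruct i as [|[|[|[|[|[|[|[|[|i]]]]]]]]]; cbn [gdE]; eexists; der. Qed.

Lemma pd_f e0 e1 r2 i q : (i < 9)%nat -> pd (fF e0 e1 r2) i q = fdE e0 e1 i q.
Proof.
  intro Hi. unfold pd. apply is_derive_unique.
  eapply D_val. unfold fF. der.
  rewrite upd_id.
  destruct i as [|[|[|[|[|[|[|[|[|i]]]]]]]]]; try lia; simpl; field.
Qed.
Lemma pd_g e0 e1 r2 i q : (i < 9)%nat -> pd (gF e0 e1 r2) i q = gdE e0 e1 i q.
Proof.
  intro Hi. unfold pd. apply is_derive_unique.
  eapply D_val. unfold gF. der.
  rewrite upd_id.
  destruct i as [|[|[|[|[|[|[|[|[|i]]]]]]]]]; try lia; simpl; field.
Qed.
Lemma D_ext (f g : R -> R) (x l : R) : (forall t, f t = g t) -> is_derive f x l -> is_derive g x l.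
Proof. intros; eapply is_derive_ext; eauto. Qed.
Lemma D_sq2 (F G : R -> R) (x a b : R) : is_derive F x a -> is_derive G x b ->
  is_derive (fun t => F t ^ 2 + G t ^ 2) x (2 * (F x * a + G x * b)).
Proof.
  intros HF HG. apply (D_ext (fun t => F t * F t + G t * G t)).
  intro t; ring.
  eapply D_val. apply D_plus; apply D_mult; eauto. ring.
Qed.

Lemma Dfk e0 e1 r2 p k : (k < 9)%nat -> is_derive (fun t => fF e0 e1 r2 (upd p k t)) (p k) (fdE e0 e1 k p).
Proof. intro. rewrite <- (pd_f e0 e1 r2 k p H). apply Derive_correct, ex_fF. Qed.
Lemma Dgk e0 e1 r2 p k : (k < 9)%nat -> is_derive (fun t => gF e0 e1 r2 (upd p k t)) (p k) (gdE e0 e1 k p).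
Proof. intro. rewrite <- (pd_g e0 e1 r2 k p H). apply Derive_correct, ex_gF. Qed.

Lemma pdK a b e0 e1 i q : (i < 9)%nat ->
  pd (Kfun a b e0 e1 0) i q = 2 * (fF e0 e1 (a^2-b^2) q * fdE e0 e1 i q + gF e0 e1 (a^2-b^2) q * gdE e0 e1 i q).
Proof.
  intro Hi. unfold pd. apply is_derive_unique.
  apply (D_ext (fun t => fF e0 e1 (a^2-b^2) (upd q i t) ^ 2 + gF e0 e1 (a^2-b^2) (upd q i t) ^ 2)).
  intro t; rewrite K_eq; reflexivity.
  eapply D_val. apply D_sq2; [apply Dfk | apply Dgk]; auto.
  cbv beta; rewrite upd_id. reflexivity.
Qed.

Definition SG (v : nat -> R) (q : pt) : pt := fun j =>
    if (j <? 3)%nat then crossc (blk q 0) (fun i => v (0 + i)%nat) j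
      + crossc (blk q 3) (fun i => v (3 + i)%nat) j + crossc (blk q 6) (fun i => v (6 + i)%nat) j
    else if (j <? 6)%nat then crossc (blk q 3) (fun i => v (0 + i)%nat) (j - 3)
    else if (j <? 9)%nat then crossc (blk q 6) (fun i => v (0 + i)%nat) (j - 6) else 0.

Lemma Alin_SG Phi p j k : Alin Phi p j k = Derive (fun t => SG (fun i => pd Phi i (upd p k t)) (upd p k t) j) (p k).
Proof. reflexivity. Qed.

Lemma D_V a b e0 e1 p i k : (i < 9)%nat -> (k < 9)%nat ->
  fF e0 e1 (a^2-b^2) p = 0 -> gF e0 e1 (a^2-b^2) p = 0 ->
  is_derive (fun t => pd (Kfun a b e0 e1 0) i (upd p k t)) (p k)
    (2 * (fdE e0 e1 k p * fdE e0 e1 i p + gdE e0 e1 k p * gdE e0 e1 i p)).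
Proof.
  intros Hi Hk Hf Hg.
  apply (D_ext (fun t => 2 * (fF e0 e1 (a^2-b^2) (upd p k t) * fdE e0 e1 i (upd p k t)
        + gF e0 e1 (a^2-b^2) (upd p k t) * gdE e0 e1 i (upd p k t)))).
  intro t; rewrite pdK; auto.
  eapply D_val. apply D_mult. apply D_const. apply D_plus; apply D_mult.
  apply Dfk; auto. apply Derive_correct, ex_fdE. apply Dgk; auto. apply Derive_correct, ex_gdE.
  cbv beta; rewrite upd_id, Hf, Hg. ring.
Qed.

Lemma pdK0 a b e0 e1 p i : (i < 9)%nat ->
  fF e0 e1 (a^2-b^2) p = 0 -> gF e0 e1 (a^2-b^2) p = 0 -> pd (Kfun a b e0 e1 0) i p = 0.
Proof. intros Hi Hf Hg. rewrite pdK, Hf, Hg; auto; ring. Qed.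

Lemma Alin_val a b e0 e1 p j k : (j < 9)%nat -> (k < 9)%nat ->
  fF e0 e1 (a^2-b^2) p = 0 -> gF e0 e1 (a^2-b^2) p = 0 ->
  Alin (Kfun a b e0 e1 0) p j k =
  SG (fun i => 2 * (fdE e0 e1 k p * fdE e0 e1 i p + gdE e0 e1 k p * gdE e0 e1 i p)) p j.
Proof.
  intros Hj Hk Hf Hg. rewrite Alin_SG. apply is_derive_unique.
  destruct j as [|[|[|[|[|[|[|[|[|j]]]]]]]]]; try lia;
  unfold SG, crossc, blk; cbn -[pd upd fdE gdE];
  (eapply D_val; [der; try (apply D_V; [lia|lia|auto|auto]) | ];
   cbv beta; rewrite upd_id; repeat (rewrite (pdK0 a b e0 e1 p); [ | lia | auto | auto]); ring).
Qed.
Definition BR (u w : nat -> R) (q : pt) : R := sum_f_R0 (fun j => u j * SG w q j) 8.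
Lemma trace_lem (u w : nat -> R) (q : pt) :
  / 2 * sum_f_R0 (fun j => sum_f_R0 (fun k =>
     SG (fun i => 2 * (u k * u i + w k * w i)) q j * SG (fun i => 2 * (u j * u i + w j * w i)) q k) 8) 8
  = - 4 * (BR u w q) ^ 2.
Proof.
  unfold BR. cbn [sum_f_R0 SG crossc blk Nat.ltb Nat.leb Nat.add Nat.sub]. field.
Qed.
Lemma CPhi_val a b e0 e1 p :
  fF e0 e1 (a^2-b^2) p = 0 -> gF e0 e1 (a^2-b^2) p = 0 ->
  CPhi (Kfun a b e0 e1 0) p = - 4 * (BR (fun i => fdE e0 e1 i p) (fun i => gdE e0 e1 i p) p) ^ 2.
Proof.
  intros Hf Hg. rewrite <- trace_lem. unfold CPhi. f_equal.
  apply sum_eq; intros j Hj. apply sum_eq; intros k Hk.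
  rewrite !Alin_val; auto; lia.
Qed.
Definition x1rP (e0 e1 : R) (p : pt) : R := (-1)*(p 7%nat) + 1*(p 3%nat).
Definition x1iP (e0 e1 : R) (p : pt) : R := 1*(p 6%nat) + 1*(p 4%nat).
Definition WrP (e0 e1 : R) (p : pt) : R := (-1)*(p 8%nat)*e1 + (1/2)*(p 0%nat).
Definition WiP (e0 e1 : R) (p : pt) : R := 1*(p 5%nat)*e1 + (1/2)*(p 1%nat).
Definition s2P (e0 e1 : R) (p : pt) : R := 1*(p 7%nat)*(p 7%nat) + 1*(p 6%nat)*(p 6%nat) + 2*(p 4%nat)*(p 6%nat) + 1*(p 4%nat)*(p 4%nat) + (-2)*(p 3%nat)*(p 7%nat) + 1*(p 3%nat)*(p 3%nat).
Definition QP (e0 e1 : R) (p : pt) : R := 1*(p 8%nat)*(p 8%nat)*e1*e1 + 1*(p 5%nat)*(p 5%nat)*e1*e1 + 1*(p 1%nat)*(p 5%nat)*e1 + (1/4)*(p 1%nat)*(p 1%nat) + (-1)*(p 0%nat)*(p 8%nat)*e1 + (1/4)*(p 0%nat)*(p 0%nat).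
Definition GpP (e0 e1 : R) (p : pt) : R := 2*(p 6%nat)*(p 8%nat)*(p 8%nat)*e1 + 2*(p 6%nat)*(p 7%nat)*(p 7%nat)*e1 + 2*(p 6%nat)*(p 6%nat)*(p 6%nat)*e1 + (-2)*(p 5%nat)*(p 5%nat)*(p 6%nat)*e1 + 2*(p 4%nat)*(p 8%nat)*(p 8%nat)*e1 + 2*(p 4%nat)*(p 7%nat)*(p 7%nat)*e1 + 2*(p 4%nat)*(p 6%nat)*(p 6%nat)*e1 + (-2)*(p 4%nat)*(p 5%nat)*(p 5%nat)*e1 + (-2)*(p 4%nat)*(p 4%nat)*(p 6%nat)*e1 + (-2)*(p 4%nat)*(p 4%nat)*(p 4%nat)*e1 + (-2)*(p 3%nat)*(p 3%nat)*(p 6%nat)*e1 + (-2)*(p 3%nat)*(p 3%nat)*(p 4%nat)*e1 + 1*(p 2%nat)*(p 7%nat)*(p 7%nat) + 1*(p 2%nat)*(p 6%nat)*(p 6%nat) + 2*(p 2%nat)*(p 4%nat)*(p 6%nat) + 1*(p 2%nat)*(p 4%nat)*(p 4%nat) + (-2)*(p 2%nat)*(p 3%nat)*(p 7%nat) + 1*(p 2%nat)*(p 3%nat)*(p 3%nat) + (-1)*(p 1%nat)*(p 7%nat)*(p 8%nat) + (-1)*(p 1%nat)*(p 5%nat)*(p 6%nat) + (-1)*(p 1%nat)*(p 4%nat)*(p 5%nat) + 1*(p 1%nat)*(p 3%nat)*(p 8%nat) + (-1)*(p 0%nat)*(p 6%nat)*(p 8%nat) + 1*(p 0%nat)*(p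 5%nat)*(p 7%nat) + (-1)*(p 0%nat)*(p 4%nat)*(p 8%nat) + (-1)*(p 0%nat)*(p 3%nat)*(p 5%nat).
Definition radP (e0 e1 : R) (p : pt) : R := 1*e0*e0 + (-2)*(p 7%nat)*e0*e1*e1 + 1*(p 7%nat)*(p 7%nat)*e1*e1*e1*e1 + 1*(p 6%nat)*(p 6%nat)*e1*e1*e1*e1 + (-2)*(p 4%nat)*(p 6%nat)*e1*e1*e1*e1 + 1*(p 4%nat)*(p 4%nat)*e1*e1*e1*e1 + (-2)*(p 3%nat)*e0*e1*e1 + 2*(p 3%nat)*(p 7%nat)*e1*e1*e1*e1 + 1*(p 3%nat)*(p 3%nat)*e1*e1*e1*e1 + 2*(p 2%nat)*(p 6%nat)*e1*e1*e1 + (-2)*(p 2%nat)*(p 4%nat)*e1*e1*e1 + 1*(p 2%nat)*(p 2%nat)*e1*e1.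
Definition abP (e0 e1 : R) (p : pt) : R := 1*(p 5%nat)*(p 8%nat) + 1*(p 4%nat)*(p 7%nat) + 1*(p 3%nat)*(p 6%nat).
Definition r2P (e0 e1 : R) (p : pt) : R := (-1)*(p 8%nat)*(p 8%nat) + (-1)*(p 7%nat)*(p 7%nat) + (-1)*(p 6%nat)*(p 6%nat) + 1*(p 5%nat)*(p 5%nat) + 1*(p 4%nat)*(p 4%nat) + 1*(p 3%nat)*(p 3%nat).
Definition YrP (e0 e1 : R) (p : pt) : R := 1*e0 + (-1)*(p 7%nat)*e1*e1 + (-1)*(p 3%nat)*e1*e1.
Definition YiP (e0 e1 : R) (p : pt) : R := 1*(p 6%nat)*e1*e1 + (-1)*(p 4%nat)*e1*e1 + 1*(p 2%nat)*e1.
Lemma cert_c1 e0 e1 p : BR (fun i => fdE e0 e1 i p) (fun i => gdE e0 e1 i p) p * s2P e0 e1 p + (QP e0 e1 p + e1^2 * s2P e0 e1 p) * GpP e0 e1 p = (2*(p 6%nat)*(p 8%nat)*(p 8%nat)*e1 + 2*(p 6%nat)*(p 7%nat)*(p 7%nat)*e1 + 2*(p 6%nat)*(p 6%nat)*(p 6%nat)*e1 + 4*(p 5%nat)*(p 7%nat)*(p 8%nat)*e1 + 2*(p 5%nat)*(p 5%nat)*(p 6%nat)*e1 + 2*(p 4%nat)*(p 8%nat)*(p 8%nat)*e1 + 6*(p 4%nat)*(p 7%nat)*(p 7%nat)*e1 + 6*(p 4%nat)*(p 6%nat)*(p 6%nat)*e1 + 2*(p 4%nat)*(p 5%nat)*(p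 5%nat)*e1 + 6*(p 4%nat)*(p 4%nat)*(p 6%nat)*e1 + 2*(p 4%nat)*(p 4%nat)*(p 4%nat)*e1 + (-4)*(p 3%nat)*(p 5%nat)*(p 8%nat)*e1 + (-8)*(p 3%nat)*(p 4%nat)*(p 7%nat)*e1 + (-2)*(p 3%nat)*(p 3%nat)*(p 6%nat)*e1 + 2*(p 3%nat)*(p 3%nat)*(p 4%nat)*e1 + 1*(p 1%nat)*(p 7%nat)*(p 8%nat) + 1*(p 1%nat)*(p 5%nat)*(p 6%nat) + 1*(p 1%nat)*(p 4%nat)*(p 5%nat) + (-1)*(p 1%nat)*(p 3%nat)*(p 8%nat) + (-1)*(p 0%nat)*(p 6%nat)*(p 8%nat) + 1*(p 0%nat)*(p 5%nat)*(p 7%nat) + (-1)*(p 0%nat)*(p 4%nat)*(p 8%nat) + (-1)*(p 0%nat)*(p 3%nat)*(p 5%nat)) * (fF e0 e1 (r2P e0 e1 p) p) + (2*(p 7%nat)*(p 8%nat)*(p 8%nat)*e1 + 2*(p 7%nat)*(p 7%nat)*(p 7%nat)*e1 + 2*(p 6%nat)*(p 6%nat)*(p 7%nat)*e1 + 2*(p 5%nat)*(p 5%nat)*(p 7%nat)*e1 + 4*(p 4%nat)*(p 6%nat)*(p 7%nat)*e1 + 2*(p 4%nat)*(p 4%nat)*(p 7%nat)*e1 + (-2)*(p 3%nat)*(p 8%nat)*(p 8%nat)*e1 + (-6)*(p 3%nat)*(p 7%nat)*(p 7%nat)*e1 + (-2)*(p 3%nat)*(p 6%nat)*(p 6%nat)*e1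 + (-2)*(p 3%nat)*(p 5%nat)*(p 5%nat)*e1 + (-4)*(p 3%nat)*(p 4%nat)*(p 6%nat)*e1 + (-2)*(p 3%nat)*(p 4%nat)*(p 4%nat)*e1 + 6*(p 3%nat)*(p 3%nat)*(p 7%nat)*e1 + (-2)*(p 3%nat)*(p 3%nat)*(p 3%nat)*e1 + (-1)*(p 1%nat)*(p 6%nat)*(p 8%nat) + 1*(p 1%nat)*(p 5%nat)*(p 7%nat) + (-1)*(p 1%nat)*(p 4%nat)*(p 8%nat) + (-1)*(p 1%nat)*(p 3%nat)*(p 5%nat) + (-1)*(p 0%nat)*(p 7%nat)*(p 8%nat) + (-1)*(p 0%nat)*(p 5%nat)*(p 6%nat) + (-1)*(p 0%nat)*(p 4%nat)*(p 5%nat) + 1*(p 0%nat)*(p 3%nat)*(p 8%nat)) * (gF e0 e1 (r2P e0 e1 p) p) + ((-4)*(p 7%nat)*(p 8%nat)*(p 8%nat)*e1*e1*e1 + 4*(p 7%nat)*(p 7%nat)*e0*e1 + (-4)*(p 7%nat)*(p 7%nat)*(p 7%nat)*e1*e1*e1 + (-4)*(p 6%nat)*(p 6%nat)*(p 7%nat)*e1*e1*e1 + 4*(p 5%nat)*(p 5%nat)*(p 7%nat)*e1*e1*e1 + 4*(p 4%nat)*(p 4%nat)*(p 7%nat)*e1*e1*e1 + 4*(p 3%nat)*(p 8%nat)*(p 8%nat)*e1*e1*e1 + (-8)*(p 3%nat)*(p 7%nat)*e0*e1 + 4*(p 3%nat)*(p 7%nat)*(p 7%nat)*e1*e1*e1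 + 4*(p 3%nat)*(p 6%nat)*(p 6%nat)*e1*e1*e1 + (-4)*(p 3%nat)*(p 5%nat)*(p 5%nat)*e1*e1*e1 + (-4)*(p 3%nat)*(p 4%nat)*(p 4%nat)*e1*e1*e1 + 4*(p 3%nat)*(p 3%nat)*e0*e1 + 4*(p 3%nat)*(p 3%nat)*(p 7%nat)*e1*e1*e1 + (-4)*(p 3%nat)*(p 3%nat)*(p 3%nat)*e1*e1*e1 + (-4)*(p 2%nat)*(p 6%nat)*(p 7%nat)*e1*e1 + (-4)*(p 2%nat)*(p 4%nat)*(p 7%nat)*e1*e1 + 4*(p 2%nat)*(p 3%nat)*(p 6%nat)*e1*e1 + 4*(p 2%nat)*(p 3%nat)*(p 4%nat)*e1*e1 + 2*(p 1%nat)*(p 6%nat)*(p 8%nat)*e1*e1 + 6*(p 1%nat)*(p 5%nat)*(p 7%nat)*e1*e1 + 2*(p 1%nat)*(p 4%nat)*(p 8%nat)*e1*e1 + (-6)*(p 1%nat)*(p 3%nat)*(p 5%nat)*e1*e1 + 2*(p 1%nat)*(p 1%nat)*(p 7%nat)*e1 + (-2)*(p 1%nat)*(p 1%nat)*(p 3%nat)*e1 + 2*(p 0%nat)*(p 7%nat)*(p 8%nat)*e1*e1 + 2*(p 0%nat)*(p 5%nat)*(p 6%nat)*e1*e1 + 2*(p 0%nat)*(p 4%nat)*(p 5%nat)*e1*e1 + (-2)*(p 0%nat)*(p 3%nat)*(p 8%nat)*e1*e1) * (abP e0 e1 p).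
Proof. unfold BR, SG, crossc, blk, fdE, gdE, fF, gF, x1rP, x1iP, WrP, WiP, s2P, QP, GpP, radP, abP, r2P.
 cbn [sum_f_R0 Nat.ltb Nat.leb Nat.add Nat.sub]. field. Qed.
Lemma cert_c2 e0 e1 p : radP e0 e1 p * s2P e0 e1 p - QP e0 e1 p ^ 2 = ((-1)*(p 8%nat)*(p 8%nat)*e1*e1 + (-1)*(p 7%nat)*e0 + 1*(p 7%nat)*(p 7%nat)*e1*e1 + 1*(p 6%nat)*(p 6%nat)*e1*e1 + 1*(p 5%nat)*(p 5%nat)*e1*e1 + (-1)*(p 4%nat)*(p 4%nat)*e1*e1 + 1*(p 3%nat)*e0 + (-1)*(p 3%nat)*(p 3%nat)*e1*e1 + 1*(p 2%nat)*(p 6%nat)*e1 + 1*(p 2%nat)*(p 4%nat)*e1 + 1*(p 1%nat)*(p 5%nat)*e1 + (1/4)*(p 1%nat)*(p 1%nat) + 1*(p 0%nat)*(p 8%nat)*e1 + (-1/4)*(p 0%nat)*(p 0%nat)) * (fF e0 e1 (r2P e0 e1 p) p) + (1*(p 6%nat)*e0 + 4*(p 5%nat)*(p 8%nat)*e1*e1 + 1*(p 4%nat)*e0 + 1*(p 2%nat)*(p 7%nat)*e1 + (-1)*(p 2%nat)*(p 3%nat)*e1 + 1*(p 1%nat)*(p 8%nat)*e1 + (-1)*(p 0%nat)*(p 5%nat)*e1 + (-1/2)*(p 0%nat)*(p 1%nat)) * (gF e0 e1 (r2P e0 e1 p) p) + ((-4)*(p 6%nat)*e0*e1*e1 + (-4)*(p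 5%nat)*(p 8%nat)*e1*e1*e1*e1 + (-4)*(p 4%nat)*e0*e1*e1 + 4*(p 4%nat)*(p 7%nat)*e1*e1*e1*e1 + 4*(p 3%nat)*(p 6%nat)*e1*e1*e1*e1 + (-4)*(p 2%nat)*(p 7%nat)*e1*e1*e1 + 4*(p 2%nat)*(p 3%nat)*e1*e1*e1) * (abP e0 e1 p).
Proof. unfold BR, SG, crossc, blk, fdE, gdE, fF, gF, x1rP, x1iP, WrP, WiP, s2P, QP, GpP, radP, abP, r2P.
 cbn [sum_f_R0 Nat.ltb Nat.leb Nat.add Nat.sub]. field. Qed.
Lemma cert_c3 e0 e1 p : BR (fun i => fdE e0 e1 i p) (fun i => gdE e0 e1 i p) p = ((-1)*(p 2%nat)*(p 7%nat)*e1*e1 + 1*(p 2%nat)*(p 3%nat)*e1*e1 + 2*(p 1%nat)*(p 8%nat)*e1*e1 + (-1)*(p 0%nat)*(p 1%nat)*e1) * (x1rP e0 e1 p) + (1*(p 2%nat)*(p 6%nat)*e1*e1 + 1*(p 2%nat)*(p 4%nat)*e1*e1 + (-2)*(p 0%nat)*(p 8%nat)*e1*e1 + 1*(p 0%nat)*(p 0%nat)*e1) * (x1iP e0 e1 p) + ((-2)*(p 5%nat)*e0 + 4*(p 5%nat)*(p 7%nat)*e1*e1 + (-1)*(p 2%nat)*(p 8%nat)*e1 + (-2)*(p 0%nat)*(p 6%nat)*e1 + (-1/2)*(p 0%nat)*(p 2%nat)) * (WrP e0 e1 p) + ((-2)*(p 8%nat)*e0 + 4*(p 7%nat)*(p 8%nat)*e1*e1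 + 1*(p 2%nat)*(p 5%nat)*e1 + (-2)*(p 1%nat)*(p 6%nat)*e1 + (-1/2)*(p 1%nat)*(p 2%nat)) * (WiP e0 e1 p) + (0) * (abP e0 e1 p).
Proof. unfold BR, SG, crossc, blk, fdE, gdE, fF, gF, x1rP, x1iP, WrP, WiP, s2P, QP, GpP, radP, abP, r2P.
 cbn [sum_f_R0 Nat.ltb Nat.leb Nat.add Nat.sub]. field. Qed.
Lemma cert_c4 e0 e1 p : WrP e0 e1 p ^ 2 - WiP e0 e1 p ^ 2 - fF e0 e1 (r2P e0 e1 p) p = ((-1)*e0 + 1*(p 7%nat)*e1*e1 + 1*(p 3%nat)*e1*e1) * (x1rP e0 e1 p) + ((-1)*(p 6%nat)*e1*e1 + 1*(p 4%nat)*e1*e1 + (-1)*(p 2%nat)*e1) * (x1iP e0 e1 p) + (0) * (abP e0 e1 p).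
Proof. unfold BR, SG, crossc, blk, fdE, gdE, fF, gF, x1rP, x1iP, WrP, WiP, s2P, QP, GpP, radP, abP, r2P.
 cbn [sum_f_R0 Nat.ltb Nat.leb Nat.add Nat.sub]. field. Qed.
Lemma cert_c5 e0 e1 p : 2 * WrP e0 e1 p * WiP e0 e1 p - gF e0 e1 (r2P e0 e1 p) p = (2*(p 6%nat)*e1*e1 + 1*(p 2%nat)*e1) * (x1rP e0 e1 p) + ((-1)*e0 + 2*(p 7%nat)*e1*e1) * (x1iP e0 e1 p) + ((-2)*e1*e1) * (abP e0 e1 p).
Proof. unfold BR, SG, crossc, blk, fdE, gdE, fF, gF, x1rP, x1iP, WrP, WiP, s2P, QP, GpP, radP, abP, r2P.
 cbn [sum_f_R0 Nat.ltb Nat.leb Nat.add Nat.sub]. field. Qed.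
Lemma xi1_eq a b e0 e1 p : xi1 a b e0 e1 0 p = (fF e0 e1 (a^2-b^2) p, gF e0 e1 (a^2-b^2) p).
Proof.
  unfold xi1, x1, z1, w1, w3, fF, gF, Mc, al, be.
  unfold Cmult, Cplus, Cminus, Copp, RtoC, Ci. apply injective_projections; simpl; field.
Qed.
Lemma sqx_eq p : sqx p = sqrt (s2P 0 0 p).
Proof. unfold sqx, s2P, x1, x2, al, be, Cmult, Re. simpl. f_equal. ring. Qed.
Lemma N_eq e0 e1 p : Nfun e0 e1 0 p = sqrt (radP e0 e1 p) + e1 ^ 2 * sqx p.
Proof.
  unfold Nfun. f_equal. f_equal.
  unfold radP, w3, y1, y2, Mc, al, be, Cmult, Cplus, Cminus, Copp, RtoC, Ci, Re. simpl. field.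
Qed.
Lemma F_zero a b e1 p : sqx p = 0 -> Ffun a b e1 0 p = 0.
Proof.
  intro Hs. unfold Ffun. rewrite Hs.
  unfold Cdiv, Cinv, Cmult, Cplus, Cminus, Copp, RtoC, Ci, Re, Im. simpl.
  unfold Rdiv. ring.
Qed.
Lemma F_pos a b e0 e1 p : 0 < sqx p -> sqx p * sqx p = s2P e0 e1 p -> a^2 - b^2 = r2P e0 e1 p ->
  Ffun a b e1 0 p * sqx p = GpP e0 e1 p.
Proof.
  intros Hs Hs2 Hr. unfold Ffun. rewrite Hr.
  transitivity (sqx p * sqx p * p 2%nat + (GpP e0 e1 p - s2P e0 e1 p * p 2%nat)).
  2: rewrite Hs2; ring.
  unfold GpP, s2P, r2P, x1, x2, z1, z2, w1, w2, w3, Mc, al, be.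
  unfold Cdiv, Cinv, Cmult, Cplus, Cminus, Copp, RtoC, Ci, Re, Im. simpl.
  field. lra.
Qed.
Lemma BR_sq a b e0 e1 p :
  inP6 a b p -> xi1 a b e0 e1 0 p = RtoC 0 ->
  (BR (fun i => fdE e0 e1 i p) (fun i => gdE e0 e1 i p) p) ^ 2
  = (Nfun e0 e1 0 p) ^ 2 * (Ffun a b e1 0 p) ^ 2.
Proof.
  intros HP H1.
  assert (Hf : fF e0 e1 (a^2-b^2) p = 0) by (rewrite xi1_eq in H1; apply (f_equal fst) in H1; exact H1).
  assert (Hg : gF e0 e1 (a^2-b^2) p = 0) by (rewrite xi1_eq in H1; apply (f_equal snd) in H1; exact H1).
  destruct HP as [Ha [Hb' Hab]]. unfold al, be in Ha, Hb', Hab. cbn [Nat.add] in Ha, Hb', Hab.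
  assert (Hr : a^2 - b^2 = r2P e0 e1 p) by (rewrite <- Ha, <- Hb'; unfold r2P; ring).
  assert (He : abP e0 e1 p = 0) by (unfold abP; rewrite <- Hab; ring).
  rewrite Hr in Hf, Hg.
  pose proof (cert_c1 e0 e1 p) as C1. pose proof (cert_c2 e0 e1 p) as C2.
  pose proof (cert_c3 e0 e1 p) as C3. pose proof (cert_c4 e0 e1 p) as C4.
  pose proof (cert_c5 e0 e1 p) as C5.
  rewrite Hf, Hg, He in C1, C2. rewrite Hf, He in C4. rewrite Hg, He in C5. rewrite He in C3.
  assert (Hs2e : s2P e0 e1 p = s2P 0 0 p) by reflexivity.
  assert (Hs2q : s2P e0 e1 p = x1rP e0 e1 p ^ 2 + x1iP e0 e1 p ^ 2) by (unfold s2P, x1rP, x1iP; ring).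
  assert (Hs2n : 0 <= s2P e0 e1 p) by (rewrite Hs2q; nra).
  rewrite N_eq.
  destruct (Req_dec (s2P e0 e1 p) 0) as [Z|NZ].
  - assert (Hx : x1rP e0 e1 p = 0 /\ x1iP e0 e1 p = 0) by (rewrite Hs2q in Z; split; nra).
    destruct Hx as [Hx1 Hx2]. rewrite Hx1, Hx2 in C4, C5, C3.
    assert (HW : WrP e0 e1 p = 0 /\ WiP e0 e1 p = 0).
    { set (u := WrP e0 e1 p) in *. set (v := WiP e0 e1 p) in *.
      assert (A1 : u^2 - v^2 - 0 = 0) by (rewrite C4; ring).
      assert (A2 : 2 * u * v - 0 = 0) by (rewrite C5; ring).
      assert (A3 : u * v = 0) by lra.
      clear - A1 A3. destruct (Rmult_integral _ _ A3) as [U|V].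
      - subst u. split; auto. nra.
      - subst v. split; auto. nra. }
    destruct HW as [HW1 HW2]. rewrite HW1, HW2 in C3.
    assert (Hsq : sqx p = 0) by (rewrite sqx_eq, <- Hs2e, Z; apply sqrt_0).
    rewrite (F_zero a b e1 p Hsq).
    replace (BR (fun i => fdE e0 e1 i p) (fun i => gdE e0 e1 i p) p) with 0 by (rewrite C3; ring).
    ring.
  - assert (Hpos : 0 < s2P e0 e1 p) by lra.
    assert (Hs : 0 < sqx p) by (rewrite sqx_eq, <- Hs2e; apply sqrt_lt_R0; auto).
    assert (Hss : sqx p * sqx p = s2P e0 e1 p) by (rewrite sqx_eq, <- Hs2e; apply sqrt_sqrt; lra).
    pose proof (F_pos a b e0 e1 p Hs Hss Hr) as HF.
    assert (Hrad : 0 <= radP e0 e1 p).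
    { assert (radP e0 e1 p = YrP e0 e1 p ^ 2 + YiP e0 e1 p ^ 2) by (unfold radP, YrP, YiP; field). nra. }
    assert (HQ : 0 <= QP e0 e1 p).
    { assert (QP e0 e1 p = WrP e0 e1 p ^ 2 + WiP e0 e1 p ^ 2) by (unfold QP, WrP, WiP; field). nra. }
    assert (HQs : sqrt (radP e0 e1 p) * sqx p = QP e0 e1 p).
    { rewrite sqx_eq, <- Hs2e, <- sqrt_mult_alt by auto.
      replace (radP e0 e1 p * s2P e0 e1 p) with (QP e0 e1 p ^ 2) by lra.
      apply sqrt_pow2; auto. }
    set (BB := BR (fun i => fdE e0 e1 i p) (fun i => gdE e0 e1 i p) p) in *.
    assert (HB : BB = - ((sqrt (radP e0 e1 p) + e1 ^ 2 * sqx p) * Ffun a b e1 0 p)).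
    { apply (Rmult_eq_reg_r (s2P e0 e1 p)); [ | lra].
      rewrite <- Hss at 2.
      replace (- ((sqrt (radP e0 e1 p) + e1 ^ 2 * sqx p) * Ffun a b e1 0 p) * (sqx p * sqx p))
        with (- ((sqrt (radP e0 e1 p) * sqx p + e1 ^ 2 * (sqx p * sqx p)) * (Ffun a b e1 0 p * sqx p))) by ring.
      rewrite HQs, Hss, HF. lra. }
    rewrite HB. ring.
Qed.

Theorem theorem4 :
  forall (a b eps0 eps1 : R) (p : pt),
    0 < b -> b < a -> 0 <= eps0 ->
    inP6 a b p ->
    xi1 a b eps0 eps1 0 p = RtoC 0 ->
    xi2 a b eps0 eps1 0 p = RtoC 0 ->
    CPhi (Kfun a b eps0 eps1 0) p
      = - 4 * (Nfun eps0 eps1 0 p) ^ 2 * (Ffun a b eps1 0 p) ^ 2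
    /\ (Nfun eps0 eps1 0 p * Ffun a b eps1 0 p <> 0 ->
          outer_center (Kfun a b eps0 eps1 0) p)
    /\ (Nfun eps0 eps1 0 p * Ffun a b eps1 0 p = 0 ->
          outer_degenerate (Kfun a b eps0 eps1 0) p).
Proof.
  intros a b e0 e1 p Hb Hab He0 HP H1 H2.
  assert (Hf : fF e0 e1 (a^2-b^2) p = 0) by (rewrite xi1_eq in H1; apply (f_equal fst) in H1; exact H1).
  assert (Hg : gF e0 e1 (a^2-b^2) p = 0) by (rewrite xi1_eq in H1; apply (f_equal snd) in H1; exact H1).
  assert (HC : CPhi (Kfun a b e0 e1 0) p = - 4 * (Nfun e0 e1 0 p) ^ 2 * (Ffun a b e1 0 p) ^ 2).
  { rewrite (CPhi_val a b e0 e1 p Hf Hg). rewrite (BR_sq a b e0 e1 p HP H1). ring. }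
  split; [exact HC | split].
  - intro Hne. unfold outer_center. rewrite HC.
    assert (0 < (Nfun e0 e1 0 p * Ffun a b e1 0 p) ^ 2) by (apply pow2_gt_0; auto).
    replace (- 4 * Nfun e0 e1 0 p ^ 2 * Ffun a b e1 0 p ^ 2) with (- 4 * (Nfun e0 e1 0 p * Ffun a b e1 0 p) ^ 2) by ring.
    lra.
  - intro Heq. unfold outer_degenerate. rewrite HC.
    replace (- 4 * Nfun e0 e1 0 p ^ 2 * Ffun a b e1 0 p ^ 2) with (- 4 * (Nfun e0 e1 0 p * Ffun a b e1 0 p) ^ 2) by ring.
    rewrite Heq. ring.
Qed.
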